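(* Let $k > d \geq 1$ be integers. There is a function $f = f_{k,d} : \mathbb{N} \to \mathbb{R}$ with $f(N) \to 0$ as $N \to \infty$ such that for every even positive integer $n$, setting $N = (k-1)n - k + 2$, there exists an $N$-vertex $k$-graph $H$ with $\delta_d(H) \geq (1/2 - f(N)) \binom{N-d}{k-d}$ that does not contain the $k$-expansion of any $n$-vertex tree all of whose vertex degrees are odd.
   Context: A $k$-graph is a $k$-uniform hypergraph. For a $k$-graph $H$ and $S \subseteq V(H)$, $\deg_H(S)$ is the number of edges containing $S$, and $\delta_d(H)$ is the minimum of $\deg_H(S)$ over all $d$-subsets $S \subseteq V(H)$. The $k$-expansion $T^{(k)}$ of a graph $T$ is the $k$-graph obtained by replacing each edge $uv$ of $T$ by a $k$-edge consisting of $u$, $v$ and $k-2$ new vertices that belong to no other edge. ''Contain'' means as a (not necessarily induced) subgraph. *)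

(* Defs.v *)
From Stdlib Require Import Reals.
From Coquelicot Require Import Coquelicot.
From mathcomp Require Import all_boot.
Local Open Scope nat_scope.
Set Implicit Arguments. Unset Strict Implicit. Unset Printing Implicit Defensive.

Definition uniform (V : finType) (k : nat) (E : {set {set V}}) : Prop :=
  forall e, e \in E -> #|e| = k.

Definition hdeg (V : finType) (E : {set {set V}}) (S : {set V}) : nat :=
  #|[set e in E | S \subset e]|.

Definition graph_adj (T : finType) (G : {set {set T}}) : rel T :=
  fun x y => [set x; y] \in G.

Definition is_tree (T : finType) (G : {set {set T}}) : Prop :=
  (forall e, e \in G -> #|e| = 2) /\
  (forall x y : T, connect (graph_adj G) x y) /\
  #|G| = #|T| - 1.

Definition gdeg (T : finType) (G : {set {set T}}) (x : T) : nat :=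
  #|[set e in G | x \in e]|.

(* The k-expansion of G: each edge e = {u,v} becomes e together with k-2 new
   vertices (inr (e,i)), i < k-2, belonging to no other edge. *)
Definition expansion_vertex (T : finType) (k : nat) : finType :=
  (T + ({set T} * 'I_(k - 2)))%type.

Definition expansion (T : finType) (k : nat) (G : {set {set T}})
  : {set {set expansion_vertex T k}} :=
  [set (@inl T ({set T} * 'I_(k - 2)) @: e) :|:
       [set (inr (e, i) : expansion_vertex T k) | i : 'I_(k - 2)]
     | e : {set T} in G].

(* H contains F (not necessarily induced): an injective map of the vertices of F
   (those covered by its edges) into V(H) sending edges of F to edges of H. *)
Definition contains (U V : finType) (F : {set {set U}}) (H : {set {set V}}) : Prop :=
  exists g : U -> V,
    {in cover F &, injective g} /\ (forall e, e \in F -> g @: e \in H).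

(* Main.v *)
Require Import Defs.
From Stdlib Require Import Reals Lra.
From Coquelicot Require Import Coquelicot.
From mathcomp Require Import all_boot zify.
Set Implicit Arguments. Unset Strict Implicit. Unset Printing Implicit Defensive.
Open Scope nat_scope.

Lemma card_sup (T : finType) (S : {set T}) (k : nat) :
  #|S| <= k ->
  #|[set e : {set T} | (#|e| == k) && (S \subset e)]| = 'C(#|T| - #|S|, k - #|S|).
Proof.
move=> hk.
rewrite -(card_in_imset (f := fun e => e :\: S)); last first.
  move=> e1 e2; rewrite !inE => /andP[_ h1] /andP[_ h2] E.
  apply/setP=> x; move/setP: E => /(_ x); rewrite !inE.
  case: (boolP (x \in S)) => //= xS _.
  by rewrite (subsetP h1 _ xS) (subsetP h2 _ xS).
rewrite (_ : #|T| - #|S| = #|~: S|); last by rewrite -(cardsC S) addKn.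
rewrite -cards_draws; apply: eq_card => B.
rewrite [RHS]in_set.
apply/imsetP/andP.
  case=> e; rewrite inE => /andP[/eqP he hS] ->; split.
    by apply/subsetP=> x; rewrite !inE => /andP[].
  by rewrite -he -(cardsID S e) (setIidPr hS) addKn.
case=> hB /eqP hc; exists (B :|: S); last first.
  apply/setP=> x; rewrite !inE; case: (boolP (x \in S)) => //= xS; rewrite ?orbF //.
  by apply/negbTE; apply: contraL xS => xB; move/subsetP: hB => /(_ x xB); rewrite inE.
rewrite in_set subsetUr andbT cardsU hc.
have -> : B :&: S = set0.
  apply/setP=> x; rewrite !inE; apply/negbTE/negP=> /andP[xB xS].
  by move/subsetP: hB => /(_ x xB); rewrite inE xS.
by rewrite cards0 subn0 subnK.
Qed.

Lemma card_sup_big (T : finType) (S : {set T}) (k : nat) :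
  k < #|S| -> #|[set e : {set T} | (#|e| == k) && (S \subset e)]| = 0.
Proof.
move=> hk; apply/eqP; rewrite cards_eq0; apply/eqP/setP=> e; rewrite !inE.
apply/negbTE/negP=> /andP[/eqP he /subset_leq_card]; lia.
Qed.

Lemma card_bigcup_le (T I : finType) (J : {pred I}) (B : I -> {set T}) :
  #|\bigcup_(i in J) B i| <= \sum_(i in J) #|B i|.
Proof.
elim/big_ind2: _ => //; first by rewrite cards0.
move=> U1 s1 U2 s2 h1 h2; rewrite cardsU; apply: leq_trans (leq_subr _ _) _.
exact: leq_add.
Qed.

Lemma card_sum_cond (T : finType) (A : {pred T}) (P : pred T) :
  #|[set x in A | P x]| = \sum_(x in A) (P x : nat).
Proof.
rewrite -sum1_card big_mkcond [RHS]big_mkcond /=; apply: eq_bigr => x _.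
by rewrite !inE; case: (x \in A); case: (P x).
Qed.

Lemma odd_sum_odd (T : finType) (I : {pred T}) (F : T -> nat) :
  (forall i, i \in I -> odd (F i)) -> odd (\sum_(i in I) F i) = odd #|I|.
Proof.
move=> h; rewrite -sum1_card.
apply: (big_ind2 (fun a b => odd a = odd b)) => //.
by move=> a b c e h1 h2; rewrite !oddD h1 h2.
Qed.

Definition sdiff (T : finType) (e P : {set T}) : {set T} :=
  [set v | (v \in e) (+) (v \in P)].

Lemma sdiffK (T : finType) (e P : {set T}) : sdiff (sdiff e P) P = e.
Proof. by apply/setP=> v; rewrite !inE; case: (v \in e); case: (v \in P). Qed.

Lemma card_sdiff (T : finType) (e P : {set T}) :
  #|e| + #|P| = #|sdiff e P| + 2 * #|e :&: P|.
Proof.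
rewrite -!sum1_card mul2n -addnn.
rewrite !(big_mkcond (fun x => x \in _)) /= -!big_split /=; apply: eq_bigr => v _.
by rewrite !inE; case: (v \in e); case: (v \in P).
Qed.

Lemma sdiffI (T : finType) (e P A : {set T}) :
  sdiff e P :&: A = sdiff (e :&: A) (P :&: A).
Proof. by apply/setP=> v; rewrite !inE; case: (v \in e); case: (v \in P); case: (v \in A). Qed.

Lemma odd_card_sdiff (T : finType) (e P : {set T}) :
  odd #|sdiff e P| = odd #|e| (+) odd #|P|.
Proof.
have := card_sdiff e P => /(congr1 odd) E.
by rewrite -oddD E oddD oddM /= addbF.
Qed.



Definition exE (n k : nat) (e : {set 'I_n}) : {set expansion_vertex 'I_n k} :=
  (@inl 'I_n ({set 'I_n} * 'I_(k - 2)) @: e) :|: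
       [set (inr (e, i) : expansion_vertex 'I_n k) | i : 'I_(k - 2)].

Lemma expansionE n k (T : {set {set 'I_n}}) : expansion k T = (@exE n k) @: T.
Proof. by []. Qed.

Lemma exE_inl n k (e : {set 'I_n}) x : (inl x \in exE k e) = (x \in e).
Proof.
rewrite /exE in_setU mem_imset; last by move=> a b [].
case: (x \in e) => //=; apply/negbTE/imsetP; by case.
Qed.

Lemma exE_inr n k (e e' : {set 'I_n}) i : (inr (e', i) \in exE k e) = (e' == e).
Proof.
rewrite /exE in_setU; apply/idP/idP.
  case/orP=> /imsetP [] // z _ [] -> _; by [].
move/eqP=> ->; apply/orP; right; apply/imsetP; by exists i.
Qed.

Lemma exE_inj n k : injective (@exE n k).
Proof.
move=> e1 e2 E; apply/setP=> x; by rewrite -(exE_inl k e1) E exE_inl.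
Qed.

Lemma no_contain (n N k : nat) (A : {set 'I_N}) (T : {set {set 'I_n}}) :
  2 <= k -> 0 < n -> ~~ odd n -> N = (k - 1) * n - k + 2 -> ~~ odd #|A| ->
  is_tree T -> (forall x, odd (gdeg T x)) ->
  ~ contains (expansion k T) [set e : {set 'I_N} | (#|e| == k) && odd #|e :&: A|].
Proof.
move=> hk hn hev hN hA [_ [_ hT]] hdeg [g [ginj gH]].
set F := expansion k T.
have FE : F = (@exE n k) @: T by [].
have cardF : #|F| = n - 1 by rewrite FE card_imset ?hT ?card_ord //; exact: exE_inj.
set C := cover F.
have inC : forall v E, E \in F -> v \in E -> v \in C.
  by move=> v E EF vE; rewrite /C /cover; apply/bigcupP; exists E.
set C0 := [set (inl x : expansion_vertex 'I_n k) | x : 'I_n] :|: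
          [set (inr p : expansion_vertex 'I_n k) | p in setX T [set: 'I_(k - 2)]].
have C0C : C0 \subset C.
  apply/subsetP=> v; rewrite in_setU => /orP[] /imsetP [z hz ->].
    have := hdeg z; rewrite /gdeg; case: (set_0Vmem [set e in T | z \in e]).
      by move=> ->; rewrite cards0.
    case=> e; rewrite inE => /andP[eT ze] _.
    by apply: (inC _ (exE k e)); [rewrite FE; apply: imset_f | rewrite exE_inl].
  case: z hz => e i; rewrite inE /= => /andP[eT _].
  by apply: (inC _ (exE k e)); [rewrite FE; apply: imset_f | rewrite exE_inr].
have cardC0 : #|C0| = n + (n - 1) * (k - 2).
  rewrite cardsU.
  have -> : [set (inl x : expansion_vertex 'I_n k) | x : 'I_n] :&:
          [set (inr p : expansion_vertex 'I_n k) | p in setX T [set: 'I_(k - 2)]] = set0.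
    apply/setP=> v; rewrite !inE; apply/negbTE/negP=> /andP[/imsetP [x _ ->] /imsetP [y _]].
    by [].
  rewrite cards0 subn0 card_imset; last by move=> a b [].
  rewrite card_imset; last by move=> a b [].
  by rewrite cardsX cardsT !card_ord hT card_ord.
have NC : N <= #|C|.
  apply: leq_trans (subset_leq_card C0C); rewrite cardC0 hN; nia.
have gC : g @: C = setT.
  apply/eqP; rewrite eqEcard subsetT cardsT card_ord card_in_imset //.
set X := C :&: g @^-1: A.
have XC : X \subset C by apply: subsetIl.
have cardX : #|X| = #|A|.
  rewrite -(card_in_imset (f := g)); last by move=> a b /(subsetP XC) ha /(subsetP XC) hb; apply: ginj.
  apply: eq_card => w; apply/imsetP/idP.
    by case=> u; rewrite !inE => /andP[_ hu] ->.
  move=> wA; have : w \in g @: C by rewrite gC inE.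
  case/imsetP=> u uC E; exists u => //; by rewrite !inE uC -E wA.
have DC : \sum_(E in F) #|E :&: X| = \sum_(v in X) #|[set E in F | v \in E]|.
  have h1 : forall E, #|E :&: X| = \sum_(v in X) (v \in E : nat).
    move=> E; rewrite -card_sum_cond; apply: eq_card => v; rewrite !inE; by rewrite andbC.
  under eq_bigr do rewrite h1.
  rewrite exchange_big /=; apply: eq_bigr => v _; by rewrite card_sum_cond.
have oddL : odd (\sum_(E in F) #|E :&: X|) = odd (n - 1).
  rewrite odd_sum_odd ?cardF // => E EF.
  have EC : E \subset C by apply/subsetP=> v; apply: inC.
  have := gH E EF; rewrite inE => /andP[_].
  suff -> : #|E :&: X| = #|g @: E :&: A| by [].
  rewrite -(card_in_imset (f := g) (D := mem (E :&: X))); last first.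
    by move=> a b /setIP[/(subsetP EC) ha _] /setIP[/(subsetP EC) hb _]; apply: ginj.
  apply: eq_card => w; rewrite [RHS]inE; apply/imsetP/andP.
    case=> u; rewrite !inE => /andP[uE /andP[_ guA]] ->; by rewrite guA imset_f.
  case=> /imsetP [u uE ->] guA; exists u => //; by rewrite !inE uE (subsetP EC _ uE) guA.
have oddR : odd (\sum_(v in X) #|[set E in F | v \in E]|) = odd #|X|.
  apply: odd_sum_odd => v vX; have vC := subsetP XC v vX.
  case: v vC {vX} => [x | [e i]] vC.
    rewrite (_ : [set E in F | inl x \in E] = (@exE n k) @: [set e in T | x \in e]).
      by rewrite card_imset; [apply: hdeg | exact: exE_inj].
    apply/setP=> E; rewrite inE; apply/andP/imsetP.
      case; rewrite FE => /imsetP [e eT ->]; rewrite exE_inl => xe; exists e => //.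
      by rewrite inE eT.
    case=> e; rewrite inE => /andP[eT xe] ->; rewrite exE_inl xe FE imset_f //.
  have eT : e \in T.
    move: vC; rewrite /C /cover => /bigcupP [E]; rewrite FE => /imsetP [e' e'T ->].
    by rewrite exE_inr => /eqP ->.
  rewrite (_ : [set E in F | inr (e, i) \in E] = [set exE k e]) ?cards1 //.
  apply/setP=> E; rewrite !inE; apply/andP/eqP.
    by case; rewrite FE => /imsetP [e' _ ->]; rewrite exE_inr => /eqP ->.
  by move=> ->; rewrite FE imset_f // exE_inr.
move: oddL oddR; rewrite DC cardX => -> hA'.
move: hA; rewrite -hA'; move: hn hev; clear.
by case: n => // n' _; rewrite /= subn1 /=; case: (odd n').
Qed.


Definition Aset (N' q : nat) : {set 'I_N'.+1} := [set v : 'I_N'.+1 | odd v && (v < 2 * q)].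
Definition Pj (N' j : nat) : {set 'I_N'.+1} := [set v : 'I_N'.+1 | v./2 == j].
Definition cond N' (S : {set 'I_N'.+1}) (q : nat) (e : {set 'I_N'.+1}) (j : nat) : bool :=
  [&& j < q, #|e :&: Pj N' j| == 1 & [disjoint Pj N' j & S]].
Definition jf N' (S : {set 'I_N'.+1}) q e := find (cond S q e) (iota 0 q).
Definition good N' (S : {set 'I_N'.+1}) q e := has (cond S q e) (iota 0 q).
Definition phi N' (S : {set 'I_N'.+1}) q e := sdiff e (Pj N' (jf S q e)).

Lemma half_eq (v j : nat) : (v./2 == j) = (v == (2 * j)) || (v == (2 * j).+1).
Proof. rewrite -divn2; apply/eqP/orP; [move=> <-|case=> /eqP ->]; lia. Qed.

Lemma Pj_sub N' j : Pj N' j \subset [set (inord (2 * j) : 'I_N'.+1); inord (2 * j).+1].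
Proof.
apply/subsetP=> v; rewrite !inE half_eq => /orP[] /eqP hv; apply/orP; [left|right];
  apply/eqP/val_inj; rewrite /= inordK // -hv; exact: ltn_ord.
Qed.

Lemma Pj_card_le N' j : #|Pj N' j| <= 2.
Proof. apply: leq_trans (subset_leq_card (Pj_sub N' j)) _; rewrite cards2; by case: (_ != _). Qed.

Lemma Pj_card N' j q : 2 * q <= N'.+1 -> j < q -> #|Pj N' j| = 2.
Proof.
move=> hq hj; apply/eqP; rewrite eqn_leq Pj_card_le /=.
have <- : [set (inord (2 * j) : 'I_N'.+1); inord (2 * j).+1] = Pj N' j.
  apply/eqP; rewrite eqEsubset Pj_sub andbT; apply/subsetP=> v; rewrite !inE half_eq.
  case/orP=> /eqP ->; rewrite inordK ?eqxx ?orbT //; lia.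
rewrite cards2; case: eqP => // /(congr1 val) /=; rewrite !inordK; lia.
Qed.

Lemma PjA_card N' j q : 2 * q <= N'.+1 -> j < q -> #|Pj N' j :&: Aset N' q| = 1.
Proof.
move=> hq hj.
have -> : Pj N' j :&: Aset N' q = [set (inord (2 * j).+1 : 'I_N'.+1)].
  apply/setP=> v; rewrite !inE half_eq; apply/idP/eqP.
    case/and3P=> /orP[] /eqP hv ho hl.
      by move: ho; rewrite hv oddM.
    apply/val_inj; rewrite /= inordK; lia.
  move=> ->; rewrite inordK ?eqxx ?orbT /=; last lia.
  rewrite oddM /=; lia.
by rewrite cards1.
Qed.

Lemma Pj_disj N' j j' : j != j' -> [disjoint Pj N' j & Pj N' j'].
Proof.
move=> h; rewrite -setI_eq0; apply/eqP/setP=> v; rewrite !inE.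
by apply/negbTE/negP=> /andP[/eqP h1 /eqP h2]; move: h; rewrite -h1 -h2 eqxx.
Qed.

Lemma Aset_card N' q : 2 * q <= N'.+1 -> #|Aset N' q| = q.
Proof.
move=> hq.
have -> : Aset N' q = [set (inord (2 * j).+1 : 'I_N'.+1) | j : 'I_q].
  apply/setP=> v; rewrite !inE; apply/andP/imsetP.
    case=> ho hl; have hj : v./2 < q by rewrite -divn2; lia.
    exists (Ordinal hj) => //; apply/val_inj; rewrite /= inordK.
      have := odd_double_half v; rewrite ho -divn2 -muln2 /=; lia.
    rewrite -divn2; lia.
  case=> j _ ->; have hj := ltn_ord j; rewrite inordK; last lia.
  by rewrite /= oddM; split => //; lia.
rewrite card_imset ?card_ord // => a b /(congr1 val) /=.
have ha := ltn_ord a; have hb := ltn_ord b.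
rewrite !inordK; [move=> h; apply/val_inj => /=; lia | lia | lia].
Qed.

Lemma good_jf N' (S : {set 'I_N'.+1}) q e :
  good S q e -> cond S q e (jf S q e) /\ jf S q e < q.
Proof.
rewrite /good /jf => h; have := nth_find 0 h; rewrite nth_iota ?add0n.
  by move=> ->; move: h; rewrite has_find size_iota.
by move: h; rewrite has_find size_iota.
Qed.

Lemma cond_phi N' (S : {set 'I_N'.+1}) q e j :
  2 * q <= N'.+1 -> good S q e -> cond S q (phi S q e) j = cond S q e j.
Proof.
move=> hq hg; have [hc hj0] := good_jf hg; rewrite /cond /phi.
set j0 := jf S q e in hc hj0 *.
congr [&& _, _ & _].
have [<-|hne] := eqVneq j0 j.
  move: hc; rewrite /cond => /and3P[_ /eqP h1 _]; rewrite h1.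
  have := card_sdiff (e :&: Pj N' j0) (Pj N' j0).
  rewrite -setIA setIid h1 (Pj_card hq hj0) -[Pj N' j0 in X in sdiff _ X]setIid -sdiffI.
  by move=> E; rewrite eqxx; apply/eqP; lia.
suff -> : sdiff e (Pj N' j0) :&: Pj N' j = e :&: Pj N' j by [].
apply/setP=> v; rewrite !inE.
case: eqP => [->|].
  by rewrite (negbTE hne) !andbF.
by move=> _; rewrite addbF.
Qed.

Lemma jf_phi N' (S : {set 'I_N'.+1}) q e :
  2 * q <= N'.+1 -> good S q e -> jf S q (phi S q e) = jf S q e /\ good S q (phi S q e).
Proof.
move=> hq hg; have E : cond S q (phi S q e) =1 cond S q e by move=> j; exact: cond_phi.
by rewrite /jf (eq_find E) /good (eq_has E).
Qed.

Lemma phiK N' (S : {set 'I_N'.+1}) q e :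
  2 * q <= N'.+1 -> good S q e -> phi S q (phi S q e) = e.
Proof. by move=> hq hg; rewrite {1}/phi (jf_phi hq hg).1 sdiffK. Qed.

Lemma phi_card N' (S : {set 'I_N'.+1}) q e :
  2 * q <= N'.+1 -> good S q e -> #|phi S q e| = #|e|.
Proof.
move=> hq hg; have [hc hj0] := good_jf hg; move: hc; rewrite /cond /phi => /and3P[_ /eqP h1 _].
have := card_sdiff e (Pj N' (jf S q e)); rewrite h1 (Pj_card hq hj0); lia.
Qed.

Lemma phi_sub N' (S : {set 'I_N'.+1}) q e :
  good S q e -> S \subset e -> S \subset phi S q e.
Proof.
move=> hg hS; have [hc _] := good_jf hg; move: hc; rewrite /cond /phi => /and3P[_ _ hd].
apply/subsetP=> v vS; rewrite inE (subsetP hS _ vS).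
by rewrite (disjointFl hd vS).
Qed.

Lemma phi_odd N' (S : {set 'I_N'.+1}) q e :
  2 * q <= N'.+1 -> good S q e ->
  odd #|phi S q e :&: Aset N' q| = ~~ odd #|e :&: Aset N' q|.
Proof.
move=> hq hg; have [_ hj0] := good_jf hg.
by rewrite /phi sdiffI odd_card_sdiff (PjA_card hq hj0) addbT.
Qed.

Lemma arith (Nn d k q C C1 C2 : nat) : d < k -> 2 * k + 2 <= Nn -> 2 * q <= Nn ->
  (Nn - d) * C1 = (k - d) * C -> (Nn - d - 1) * C2 = (k - d - 1) * C1 ->
  Nn * ((3 + 2 * d) * C1 + q * C2) <= (2 * (3 + 2 * d) * k + 4 * k * k) * C.
Proof.
move=> hdk hN hq E1 E2.
set M := Nn - d in E1 E2.
have hM : Nn <= 2 * M by rewrite /M; lia.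
have hqM : q <= M by rewrite /M; lia.
have hM1 : M <= 2 * (M - 1) by rewrite /M; lia.
set a := 3 + 2 * d.
have h1 : Nn * C1 <= 2 * (M * C1) by rewrite mulnA; apply: leq_mul.
have h2 : M * C1 <= k * C by rewrite E1; apply: leq_mul => //; lia.
have s1 : Nn * (a * C1) <= 2 * a * k * C.
  rewrite mulnCA (_ : 2 * a * k * C = a * (2 * (k * C))); last by rewrite mulnCA !mulnA.
  apply: leq_mul => //; apply: leq_trans h1 _; by rewrite leq_mul2l h2 orbT.
have h3 : Nn * q <= 4 * (M * (M - 1)).
  have : Nn * q <= (2 * M) * (2 * (M - 1)) by apply: leq_mul => //; apply: leq_trans hqM hM1.
  by rewrite mulnACA.
have h4 : M * ((M - 1) * C2) <= k * k * C.
  rewrite E2 mulnCA E1.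
  have : (k - d - 1) * (k - d) <= k * k by apply: leq_mul; lia.
  by move=> h; rewrite mulnA; apply: leq_mul.
have s2 : Nn * (q * C2) <= 4 * k * k * C.
  rewrite mulnA; apply: leq_trans (leq_mul h3 (leqnn C2)) _.
  rewrite -!mulnA; apply: leq_mul => //.
  by move: h4; rewrite !mulnA.
rewrite mulnDr mulnDl; exact: leq_add.
Qed.
Lemma binE1 (Nn d k : nat) : d < k ->
  (Nn - d) * 'C(Nn - d.+1, k - d.+1) = (k - d) * 'C(Nn - d, k - d).
Proof.
move=> hdk; have e : (k - d.+1).+1 = k - d by lia.
have := mul_bin_diag (Nn - d) (k - d.+1); by rewrite -subnS e.
Qed.

Lemma binE2 (Nn d k : nat) : d < k ->
  (Nn - d - 1) * (if d.+2 <= k then 'C(Nn - d.+2, k - d.+2) else 0)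
  = (k - d - 1) * 'C(Nn - d.+1, k - d.+1).
Proof.
move=> hdk; case: ifP => hk.
  have e : (k - d.+2).+1 = k - d.+1 by lia.
  have e2 : Nn - d - 1 = Nn - d.+1 by lia.
  have e3 : k - d - 1 = k - d.+1 by lia.
  have := mul_bin_diag (Nn - d.+1) (k - d.+2); by rewrite -subnS e e2 e3.
have e : k - d - 1 = 0 by move: hk; lia.
by rewrite e muln0 mul0n.
Qed.


Lemma countA1 N' k (S : {set 'I_N'.+1}) q :
  2 * q <= N'.+1 ->
  #|[set e : {set 'I_N'.+1} | (#|e| == k) && (S \subset e)]| <=
  2 * #|[set e : {set 'I_N'.+1} | (#|e| == k) && (S \subset e)] :&: [set e : {set 'I_N'.+1} | odd #|e :&: Aset N' q|]|
  + #|[set e : {set 'I_N'.+1} | (#|e| == k) && (S \subset e)] :\: [set e : {set 'I_N'.+1} | good S q e]|.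
Proof.
move=> hq.
set Q' := [set e : {set 'I_N'.+1} | (#|e| == k) && (S \subset e)].
set B := [set e : {set 'I_N'.+1} | odd #|e :&: Aset N' q|].
set G := [set e : {set 'I_N'.+1} | good S q e].
rewrite -(cardsID B Q') mul2n -addnn -addnA leq_add2l.
rewrite -(cardsID G (Q' :\: B)); apply: leq_add.
  rewrite -(card_in_imset (f := phi S q)); last first.
    move=> a b; rewrite !inE => /andP[_ ga] /andP[_ gb] E.
    by rewrite -(phiK hq ga) E (phiK hq gb).
  apply: subset_leq_card; apply/subsetP=> w /imsetP [e]; rewrite !inE.
  case/andP=> /and3P[oe /eqP ke se] ge ->.
  by rewrite (phi_odd hq ge) oe (phi_card hq ge) ke eqxx (phi_sub ge se).
apply: subset_leq_card; apply/subsetP=> e; rewrite !inE.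
by case/and4P=> -> _ -> ->.
Qed.

Lemma L1_card N' q (S : {set 'I_N'.+1}) :
  2 * q <= N'.+1 -> N'.+1 - 2 * q <= 3 ->
  #|[set v : 'I_N'.+1 | (v \notin S) && ((q <= v./2) || ~~ [disjoint Pj N' v./2 & S])]|
   <= 3 + 2 * #|S|.
Proof.
move=> hq hq3.
set R3 := [set (inord (2 * q + i) : 'I_N'.+1) | i : 'I_3].
apply: (@leq_trans #|R3 :|: \bigcup_(s in S) Pj N' s./2|).
  apply: subset_leq_card; apply/subsetP=> v; rewrite inE => /andP[_ /orP[h|h]].
    apply/setUP; left; apply/imsetP.
    have hv := ltn_ord v.
    have hi : v - 2 * q < 3 by move: h; rewrite -divn2; lia.
    exists (Ordinal hi) => //; apply/val_inj; rewrite /= inordK; move: h; rewrite -divn2; lia.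
  apply/setUP; right.
  have [E|[s]] := set_0Vmem (Pj N' v./2 :&: S); first by move: h; rewrite -setI_eq0 E eqxx.
  rewrite !inE => /andP[/eqP hs sS]; apply/bigcupP; exists s => //; by rewrite inE hs.
rewrite cardsU; apply: leq_trans (leq_subr _ _) _; apply: leq_add.
  by apply: leq_trans (leq_imset_card _ _) _; rewrite card_ord.
apply: leq_trans (card_bigcup_le _ _) _.
apply: leq_trans (_ : \sum_(s in S) 2 <= _); last by rewrite sum_nat_const mulnC.
apply: leq_sum => s _; exact: Pj_card_le.
Qed.

Lemma countA2 N' k d (S : {set 'I_N'.+1}) q :
  2 * q <= N'.+1 -> N'.+1 - 2 * q <= 3 -> #|S| = d -> d < k ->
  #|[set e : {set 'I_N'.+1} | (#|e| == k) && (S \subset e)] :\: [set e : {set 'I_N'.+1} | good S q e]|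
  <= (3 + 2 * d) * 'C(N'.+1 - d.+1, k - d.+1)
     + q * (if d.+2 <= k then 'C(N'.+1 - d.+2, k - d.+2) else 0).
Proof.
move=> hq hq3 hS hdk.
set L1 := [set v : 'I_N'.+1 | (v \notin S) && ((q <= v./2) || ~~ [disjoint Pj N' v./2 & S])].
set Y1 := fun v : 'I_N'.+1 => [set e : {set 'I_N'.+1} | (#|e| == k) && ((v |: S) \subset e)].
set J := [set j : 'I_q | [disjoint Pj N' j & S]].
set Y2 := fun j : 'I_q => [set e : {set 'I_N'.+1} | (#|e| == k) && ((Pj N' j :|: S) \subset e)].
apply: (@leq_trans #|(\bigcup_(v in L1) Y1 v) :|: (\bigcup_(j in J) Y2 j)|).
  apply: subset_leq_card; apply/subsetP=> e; rewrite !inE => /and3P[ng /eqP ke se].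
  have [E|[v]] := set_0Vmem (e :\: S).
    have : e \subset S by apply/subsetP=> x xe; apply/negPn/negP=> xS; move/setP: E => /(_ x); rewrite !inE xS xe.
    by move/subset_leq_card; lia.
  rewrite inE => /andP[vS ve].
  have vSe : (v |: S) \subset e by rewrite subUset sub1set ve se.
  case: (boolP ((q <= v./2) || ~~ [disjoint Pj N' v./2 & S])) => hc.
    apply/orP; left; apply/bigcupP; exists v; first by rewrite inE vS hc.
    by rewrite inE ke eqxx vSe.
  apply/orP; right; move: hc; rewrite negb_or -ltnNge negbK => /andP[hj hd].
  apply/bigcupP; exists (Ordinal hj); first by rewrite inE.
  rewrite inE ke eqxx /= subUset se andbT.
  have hnc : ~~ cond S q e v./2.
    move: ng; rewrite /good => /hasPn; apply; by rewrite mem_iota add0n hj.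
  move: hnc; rewrite /cond hj hd andbT /= => hne.
  have h1 : 0 < #|e :&: Pj N' v./2| by apply/card_gt0P; exists v; rewrite !inE ve eqxx.
  have h2 : #|e :&: Pj N' v./2| <= 2 by apply: leq_trans (subset_leq_card (subsetIr _ _)) (Pj_card_le _ _).
  have E : e :&: Pj N' v./2 = Pj N' v./2.
    apply/eqP; rewrite eqEcard subsetIr (Pj_card hq hj) /=.
    move: hne h1; case: #|_| => [|[|]] //.
  by rewrite -E subsetIl.
rewrite cardsU; apply: leq_trans (leq_subr _ _) _; apply: leq_add.
  apply: leq_trans (card_bigcup_le _ _) _.
  apply: (@leq_trans (\sum_(v in L1) 'C(N'.+1 - d.+1, k - d.+1))).
    apply: eq_leq; apply: eq_bigr => v; rewrite inE => /andP[vS _].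
    rewrite card_sup; rewrite ?cardsU1 ?vS ?hS ?card_ord //.
  rewrite sum_nat_const; apply: leq_mul => //; rewrite -hS; exact: L1_card.
apply: leq_trans (card_bigcup_le _ _) _.
apply: (@leq_trans (\sum_(j in J) (if d.+2 <= k then 'C(N'.+1 - d.+2, k - d.+2) else 0))).
  apply: eq_leq; apply: eq_bigr => j; rewrite inE => hd.
  have hc : #|Pj N' j :|: S| = d.+2.
    rewrite cardsU (Pj_card hq (ltn_ord j)) hS.
    move: hd; rewrite -setI_eq0 => /eqP ->; rewrite cards0; lia.
  case: ifP => hk.
    by rewrite card_sup hc ?card_ord.
  by rewrite card_sup_big // hc; lia.
rewrite sum_nat_const; apply: leq_mul => //.
by apply: leq_trans (max_card _) _; rewrite card_ord.
Qed.

Definition Hset N' k q : {set {set 'I_N'.+1}} :=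
  [set e : {set 'I_N'.+1} | (#|e| == k) && odd #|e :&: Aset N' q|].

Lemma nat_main N' k d (S : {set 'I_N'.+1}) :
  d < k -> 2 * k + 2 <= N'.+1 -> #|S| = d ->
  N'.+1 * 'C(N'.+1 - d, k - d) <=
  2 * N'.+1 * hdeg (Hset N' k (2 * (N'.+1 %/ 4))) S
  + (2 * (3 + 2 * d) * k + 4 * k * k) * 'C(N'.+1 - d, k - d).
Proof.
move=> hdk hN hS.
set q := 2 * (N'.+1 %/ 4).
have hq : 2 * q <= N'.+1 by rewrite /q; lia.
have hq3 : N'.+1 - 2 * q <= 3 by rewrite /q; lia.
have A1 := countA1 k S hq.
have A2 := countA2 hq hq3 hS hdk.
have hC : #|[set e : {set 'I_N'.+1} | (#|e| == k) && (S \subset e)]| = 'C(N'.+1 - d, k - d).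
  by rewrite card_sup hS ?card_ord //; lia.
have hP : hdeg (Hset N' k q) S =
   #|[set e : {set 'I_N'.+1} | (#|e| == k) && (S \subset e)] :&: [set e : {set 'I_N'.+1} | odd #|e :&: Aset N' q|]|.
  rewrite /hdeg; apply: eq_card => e; rewrite !inE.
  by case: (#|e| == k); case: (S \subset e); case: (odd _).
set C := 'C(N'.+1 - d, k - d) in hC *.
set C1 := 'C(N'.+1 - d.+1, k - d.+1) in A2.
set C2 := (if d.+2 <= k then 'C(N'.+1 - d.+2, k - d.+2) else 0) in A2.
have E1 := @binE1 N'.+1 d k hdk.
have E2 := @binE2 N'.+1 d k hdk.
have AR := @arith N'.+1 d k q C C1 C2 hdk hN hq E1 E2.
rewrite hP -/C; rewrite hC in A1.
apply: (@leq_trans (N'.+1 * (2 * #|[set e : {set 'I_N'.+1} | (#|e| == k) && (S \subset e)] :&: [set e : {set 'I_N'.+1} | odd #|e :&: Aset N' q|]| + ((3 + 2 * d) * C1 + q * C2)))).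
  rewrite leq_mul2l; apply/orP; right; apply: leq_trans A1 _; by rewrite leq_add2l.
rewrite mulnDr -mulnA [N'.+1 * (2 * _)]mulnCA mulnA; rewrite leq_add2l; exact: AR.
Qed.

Open Scope R_scope.

Lemma real_step (Nn C P c : nat) : (0 < Nn)%nat ->
  (Nn * C <= 2 * (Nn * P) + c * C)%nat ->
  (1 / 2 - INR c / 2 * / INR Nn) * INR C <= INR P.
Proof.
move=> hpos /leP /le_INR; rewrite !plus_INR !mult_INR.
set x := INR Nn; set Cr := INR C; set Pr := INR P; set cr := INR c.
move=> h.
have hx : 0 < x by apply: lt_0_INR; apply/ltP.
have hP : 0 <= Pr by apply: pos_INR.
have h2 : INR 2 = 2 by [].
change (INR 0) with 0 in h.
have E : Pr - (1 / 2 - cr / 2 * / x) * Cr = (2 * x * Pr + cr * Cr - x * Cr) * / (2 * x).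
  field; lra.
have : 0 <= (2 * x * Pr + cr * Cr - x * Cr) * / (2 * x).
  apply: Rmult_le_pos; first lra.
  by left; apply: Rinv_0_lt_compat; lra.
lra.
Qed.

Theorem theorem3p3 (k d : nat) (hd : (1 <= d)%nat) (hdk : (d < k)%nat) :
  exists f : nat -> R,
    is_lim_seq (fun N => f N) 0 /\
    forall n : nat, (0 < n)%nat -> ~~ odd n ->
      let N := ((k - 1) * n - k + 2)%nat in
      exists H : {set {set 'I_N}},
        uniform k H /\
        (forall S : {set 'I_N}, #|S| = d ->
           ((1 / 2 - f N) * INR 'C(N - d, k - d) <= INR (hdeg H S))%R) /\
        (forall T : {set {set 'I_n}},
           is_tree T -> (forall x : 'I_n, odd (gdeg T x)) ->
           ~ contains (expansion k T) H).
Proof.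
set c := (2 * (3 + 2 * d) * k + 4 * k * k)%nat.
exists (fun N => if (N < 2 * k + 2)%nat then (1:R) else (INR c / 2 * / INR N)).
split.
  have h := is_lim_seq_scal_l _ (INR c / 2) _ (is_lim_seq_inv _ _ is_lim_seq_INR ltac:(discriminate)).
  simpl in h; rewrite Rmult_0_r in h.
  apply: is_lim_seq_ext_loc h; exists (2 * k + 2)%nat => N /leP hN.
  by rewrite ltnNge hN.
move=> n hn hev N.
have hN : ((k - 1) * n - k + 2 = ((k - 1) * n - k + 1).+1)%nat by lia.
rewrite /N hN; set N' := ((k - 1) * n - k + 1)%nat.
set q := (2 * (N'.+1 %/ 4))%nat.
exists (Hset N' k q); split; last split.
- by move=> e; rewrite inE => /andP[/eqP].
- move=> S hS; case: (ltnP N'.+1 (2 * k + 2)) => hsmall.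
    have := pos_INR 'C(N'.+1 - d, k - d); have := pos_INR (hdeg (Hset N' k q) S).
    nra.

  have hn0 := nat_main hdk hsmall hS; rewrite -/q -/c -mulnA in hn0.
  exact: real_step hn0.
- move=> T hT hodd; apply: (@no_contain n N'.+1 k (Aset N' q) T) => //.
  + lia.
  + rewrite Aset_card /q; first by rewrite oddM.
    rewrite /q; lia.
Qed.
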